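(* Let $\beta>2\alpha>0$ with $\beta+2\alpha\le1$, and let $\varphi_N(x)=\frac12x^TAx-\sum_{k=1}^{s_N}\log\cosh(x^TAe_k)$ for $x\in\mathbb{R}^{s_N}$. Then $\varphi_N$ takes its global minimum at $x=(0,\dots,0)$.
   Context: $A$ is the $s_N\times s_N$ symmetric circulant matrix $A=\beta I+\alpha(P+P^T)$, where $P$ is the cyclic shift matrix (so $A_{kk}=\beta$, $A_{k,k\pm1}=\alpha$ with indices mod $s_N$); $e_k$ are the standard basis vectors of $\mathbb{R}^{s_N}$. *)

(* Defs.v *)
From Stdlib Require Import Reals.
From mathcomp Require Import all_boot all_order all_algebra.
From mathcomp Require Import Rstruct.
Set Implicit Arguments. Unset Strict Implicit. Unset Printing Implicit Defensive.
Import GRing.Theory Num.Theory.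
Local Open Scope ring_scope.

Definition shiftP (n : nat) : 'M[R]_n := \matrix_(i, j) (i == ordS j)%:R.

Definition Amat (n : nat) (alpha beta : R) : 'M[R]_n :=
  beta%:M + alpha *: (shiftP n + (shiftP n)^T).

Definition e_vec (n : nat) (k : 'I_n) : 'cV[R]_n := delta_mx k 0.

Definition phiN (n : nat) (alpha beta : R) (x : 'cV[R]_n) : R :=
  (1 / 2) * (x^T *m Amat n alpha beta *m x) 0 0
  - \sum_(k < n) ln (cosh ((x^T *m Amat n alpha beta *m e_vec k) 0 0)).

(* Main.v *)
Require Import Defs.
From Stdlib Require Import Reals.
From mathcomp Require Import all_boot all_order all_algebra.
From mathcomp Require Import Rstruct.
From Stdlib Require Import Lra.
Local Open Scope ring_scope.

Module LC.
From Coquelicot Require Import Coquelicot.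
Local Open Scope R_scope.

Lemma sinh_sign d : 0 <= d * sinh d.
Proof.
destruct (Rtotal_order d 0) as [H|[H|H]].
- pose proof (sinh_lt _ _ H). rewrite sinh_0 in H0. nra.
- subst. lra.
- pose proof (sinh_lt _ _ H). rewrite sinh_0 in H0. nra.
Qed.

Lemma cosh_pos' x : 0 < cosh x.
Proof. unfold cosh. pose proof (exp_pos x). pose proof (exp_pos (-x)). lra. Qed.

Lemma k_sign c : 0 <= c * (c * cosh c - sinh c).
Proof.
set (k := fun t => t * cosh t - sinh t).
assert (Hd : forall t, is_derive k t (t * sinh t)).
{ intro t. unfold k, cosh, sinh. auto_derive; [auto|]. field. }
destruct (MVT_gen k 0 c (fun t => t * sinh t)) as [d [Hd1 Hd2]].
{ intros; apply Hd. }
{ intros; apply (proj2 (continuity_pt_filterlim k x)). apply (@ex_derive_continuous R_AbsRing R_NormedModule). eexists; apply Hd. }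
assert (k 0 = 0) by (unfold k; rewrite sinh_0; lra).
change (c * cosh c - sinh c) with (k c).
assert (k c = d * sinh d * c) by lra.
rewrite H0.
pose proof (sinh_sign d). nra.
Qed.

Lemma lncosh_le y : ln (cosh y) <= y * y / 2.
Proof.
set (g := fun t => t * t / 2 - ln (cosh t)).
assert (Hd : forall t, is_derive g t (t - sinh t / cosh t)).
{ intro t. unfold g. pose proof (cosh_pos' t). unfold cosh, sinh in *.
  pose proof (exp_pos t). pose proof (exp_pos (-t)).
  auto_derive. { lra. }
  field. pose proof (exp_pos t). pose proof (exp_pos (-t)). lra. }
destruct (MVT_gen g 0 y (fun t => t - sinh t / cosh t)) as [d [Hd1 Hd2]].
{ intros; apply Hd. }
{ intros. apply (proj2 (continuity_pt_filterlim g x)). apply (@ex_derive_continuous R_AbsRing R_NormedModule). eexists; apply Hd. }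
assert (g 0 = 0) by (unfold g; rewrite cosh_0 ln_1; lra).
assert (Hgy : 0 <= g y).
{ assert (E : g y = (d * cosh d - sinh d) / cosh d * y).
  { replace (g y) with (g y - g 0) by lra. rewrite Hd2.
    field. pose proof (cosh_pos' d); lra. }
  rewrite E. pose proof (k_sign d). pose proof (cosh_pos' d).
  assert (Hs : 0 <= d * y).
  { unfold Rmin, Rmax in Hd1. destruct (Rle_dec 0 y); nra. }
  assert (Hq : 0 <= (d * cosh d - sinh d) * y).
  { destruct (Req_dec d 0) as [->|Hn].
    - rewrite sinh_0. lra.
    - assert (0 < d * d) by (apply Rsqr_pos_lt; exact Hn).
      assert (0 <= ((d * cosh d - sinh d) * y) * (d * d)) by nra.
      nra. }
  unfold Rdiv. rewrite Rmult_assoc (Rmult_comm (/ cosh d)) -Rmult_assoc.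
  apply Rmult_le_pos; [exact Hq|]. left; apply Rinv_0_lt_compat; lra. }
unfold g in Hgy. lra.
Qed.

End LC.
Local Open Scope ring_scope.
From mathcomp Require Import ring lra.
Local Open Scope ring_scope.

Import Order.TTheory GRing.Theory Num.Theory.

Lemma sum_delta n (F : 'I_n -> R) j : \sum_i F i * (i == j)%:R = F j.
Proof.
rewrite (bigD1 j) //= eqxx mulr1 big1 ?addr0 // => i /negbTE ->; by rewrite mulr0.
Qed.

Lemma sumS n (F : 'I_n -> R) : \sum_k F (ordS k) = \sum_k F k.
Proof. by rewrite [RHS](reindex_inj (@ordS_inj n)). Qed.

Lemma sumP n (F : 'I_n -> R) : \sum_k F (ord_pred k) = \sum_k F k.
Proof. by rewrite [RHS](reindex_inj (@ord_pred_inj n)). Qed.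

Definition yv n (alpha beta : R) (x : 'cV[R]_n) (k : 'I_n) : R :=
  (beta * x k 0 + alpha * (x (ordS k) 0 + x (ord_pred k) 0))%R.

Arguments yv {n}.

Lemma xA n alpha beta (x : 'cV[R]_n) k :
  (x^T *m Amat n alpha beta) 0 k = yv alpha beta x k.
Proof.
rewrite mxE /yv.
under eq_bigr => i _ do rewrite !mxE.
have E : forall i : 'I_n, (k == ordS i) = (i == ord_pred k).
  by move=> i; apply/eqP/eqP => [->|->]; rewrite ?ordSK ?ord_predK.
under eq_bigr => i _ do rewrite E -mulr_natr.
rewrite (eq_bigr (fun i => beta * (x i 0 * (i == k)%:R) + alpha * (x i 0 * (i == ordS k)%:R)
   + alpha * (x i 0 * (i == ord_pred k)%:R))); last first.
  by move=> i _; ring.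
rewrite !big_split /= -!mulr_sumr !sum_delta; ring.
Qed.

Lemma phiN_eq n alpha beta (x : 'cV[R]_n) :
  phiN alpha beta x = (1/2) * \sum_k yv alpha beta x k * x k 0
     - \sum_k ln (cosh (yv alpha beta x k)).
Proof.
rewrite /phiN mxE; congr (_ * _ - _).
  by apply: eq_bigr => k _; rewrite xA.
apply: eq_bigr => k _; congr (ln (cosh _)).
rewrite -(xA _ alpha beta x k) /e_vec [LHS]mxE.
under eq_bigr => j _ do rewrite [delta_mx k 0 j 0]mxE andbT.
by rewrite sum_delta.
Qed.

Lemma pw (alpha beta t a b c : R) : 0 < alpha -> 0 <= t ->
  (t = 1 - 2 * beta \/ t = 2 * beta - 1) ->
  (beta - beta ^+ 2 - alpha * t) * b ^+ 2 - (alpha * t / 2 + 2 * alpha ^+ 2) * (a ^+ 2 + c ^+ 2)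
  <= (beta * b + alpha * (c + a)) * b - (beta * b + alpha * (c + a)) ^+ 2.
Proof.
move=> ha ht [] ?; subst t.
- have h1 : 0 <= alpha * (1 - 2 * beta) * (b + a) ^+ 2 by apply: mulr_ge0; [apply: mulr_ge0; lra| apply: sqr_ge0].
  have h2 : 0 <= alpha * (1 - 2 * beta) * (b + c) ^+ 2 by apply: mulr_ge0; [apply: mulr_ge0; lra| apply: sqr_ge0].
  have h3 : 0 <= alpha ^+ 2 * (a - c) ^+ 2 by apply: mulr_ge0; apply: sqr_ge0.
  nra.
- have h1 : 0 <= alpha * (2 * beta - 1) * (b - a) ^+ 2 by apply: mulr_ge0; [apply: mulr_ge0; lra| apply: sqr_ge0].
  have h2 : 0 <= alpha * (2 * beta - 1) * (b - c) ^+ 2 by apply: mulr_ge0; [apply: mulr_ge0; lra| apply: sqr_ge0].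
  have h3 : 0 <= alpha ^+ 2 * (a - c) ^+ 2 by apply: mulr_ge0; apply: sqr_ge0.
  nra.
Qed.

Lemma cst (alpha beta : R) : 0 < alpha -> 2 * alpha < beta -> beta + 2 * alpha <= 1 ->
  exists t, [/\ 0 <= t, (t = 1 - 2 * beta \/ t = 2 * beta - 1) &
     0 <= beta - beta ^+ 2 - 2 * alpha * t - 4 * alpha ^+ 2].
Proof.
move=> ha hb hc.
have [hl|hl] := lerP beta (1/2).
- exists (1 - 2 * beta); split; [lra| by left|].
  have : 0 <= (beta - 2 * alpha) * (1 + 2 * alpha - beta) by apply: mulr_ge0; lra.
  nra.
- exists (2 * beta - 1); split; [lra| by right|].
  have : 0 <= (beta + 2 * alpha) * (1 - beta - 2 * alpha) by apply: mulr_ge0; lra.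
  nra.
Qed.

Theorem lemma4p3 (n : nat) (alpha beta : R) :
  0 < alpha -> 2 * alpha < beta -> beta + 2 * alpha <= 1 ->
  forall x : 'cV[R]_n, phiN alpha beta (0 : 'cV[R]_n) <= phiN alpha beta x.
Proof.
move=> ha hb hc x.
rewrite !phiN_eq.
have -> : \sum_k yv alpha beta (0 : 'cV[R]_n) k * (0 : 'cV[R]_n) k 0 = 0.
  by rewrite big1 // => k _; rewrite mxE mulr0.
have -> : \sum_k ln (cosh (yv alpha beta (0:'cV[R]_n) k)) = 0.
  rewrite big1 // => k _; rewrite /yv !mxE !mulr0 !addr0 mulr0.
  by rewrite addr0 cosh_0 ln_1.
set y := yv alpha beta x.
have s1 : \sum_k ln (cosh (y k)) <= (1/2) * \sum_k y k * y k.
  rewrite mulr_sumr; apply: ler_sum => k _.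
  have /RleP := LC.lncosh_le (y k).
  rewrite RdivE RmultE => h; apply: (le_trans h).
  have E2 : IZR 2 = 2 by [].
  by rewrite E2 mulrC div1r.
have s2 : \sum_k y k * y k <= \sum_k y k * x k 0.
  have [t [ht0 ht1 ht2]] := cst _ _ ha hb hc.
  have pwk : forall k, (beta - beta ^+ 2 - alpha * t) * x k 0 ^+ 2
      - (alpha * t / 2 + 2 * alpha ^+ 2) * (x (ord_pred k) 0 ^+ 2 + x (ordS k) 0 ^+ 2)
      <= y k * x k 0 - y k * y k.
    move=> k; have := pw _ _ _ (x (ord_pred k) 0) (x k 0) (x (ordS k) 0) ha ht0 ht1.
    by rewrite /y /yv expr2.
  have H : \sum_k ((beta - beta ^+ 2 - alpha * t) * x k 0 ^+ 2 - (alpha * t / 2 + 2 * alpha ^+ 2) * (x (ord_pred k) 0 ^+ 2 + x (ordS k) 0 ^+ 2)) <= \sum_k (y k * x k 0 - y k * y k) by apply: ler_sum => k _; apply: pwk.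
  rewrite !sumrB -!mulr_sumr big_split /= (@sumS n (fun k => x k 0 ^+ 2)) (@sumP n (fun k => x k 0 ^+ 2)) in H.
  have hS : 0 <= \sum_k x k 0 ^+ 2 by apply: sumr_ge0 => k _; apply: sqr_ge0.
  have := mulr_ge0 ht2 hS.
  lra.
lra.
Qed.
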